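(* Let $F_3$ be the free group on the generators $a,b,c$, and let $\sigma_1,\sigma_2$ be substitutions on the alphabet $\{a,b,c\}$ (each letter is mapped to a nonempty finite word in $a,b,c$ using only positive powers), each extended to an endomorphism of $F_3$, and assume each $\sigma_i$ acts as an automorphism of $F_3$. Assume that the substitution (abelianisation) matrix of $\sigma_1$ is primitive and unimodular, has irreducible characteristic polynomial, and has a Perron–Frobenius eigenvalue which is a Pisot number. Suppose there exists a fixed element $w\in F_3$ such that $\sigma_1(g)=w^{-1}\sigma_2(g)\,w$ for every generator $g\in\{a,b,c\}$. Then the tilings (equivalently, the bi-infinite sequences) generated by $\sigma_1$ and $\sigma_2$ are locally isomorphic, i.e. they have exactly the same finite subpatterns: the language of $\sigma_1$ equals the language of $\sigma_2$.
   Context: The substitution matrix of $\sigma$ is the $3\times 3$ matrix whose $(i,j)$ entry counts the occurrences of letter $i$ in $\sigma(j)$. The language of a substitution $\sigma$ is the set of all finite words occurring as factors (subwords) of $\sigma^n(x)$ for some $n\ge 0$ and some letter $x\in\{a,b,c\}$. The tilings generated by $\sigma$ are the geometric realisations of the bi-infinite sequences whose finite factors all lie in this language, with tile $i$ an interval of length equal to the $i$-th component of the left Perron–Frobenius eigenvector of the substitution matrix. Two tilings (or sequences) are locally isomorphic (LI) if every finite subpattern of one occurs in the other and vice versa. *)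

(* Defs.v *)
From HB Require Import structures.
From mathcomp Require Import all_boot all_order all_algebra all_field.
Set Implicit Arguments. Unset Strict Implicit. Unset Printing Implicit Defensive.
Import Order.TTheory GRing.Theory Num.Theory.
Local Open Scope ring_scope.

(* Alphabet {a,b,c} = 'I_3 (a = 0, b = 1, c = 2). *)
Definition letter := 'I_3.

(* A substitution: each letter is sent to a finite word of letters
   (positivity of powers is built in; non-emptiness is a hypothesis). *)
Definition subst := letter -> seq letter.

Definition subst_word (s : subst) (w : seq letter) : seq letter :=
  flatten (map s w).

Definition language (s : subst) (u : seq letter) : Prop :=
  exists (n : nat) (x : letter), infix u (iter n (subst_word s) [:: x]).

(* Group words: letters with a sign (true = positive power, false = inverse). *)
Definition gletter := (letter * bool)%type.
Definition gword := seq gletter.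

Definition push (x : gletter) (w : gword) : gword :=
  match w with
  | y :: w' => if (y.1 == x.1) && (y.2 != x.2) then w' else x :: w
  | [::] => [:: x]
  end.

(* free reduction; the elements of F_3 are the reduced words *)
Definition freduce (w : gword) : gword := foldr push [::] w.
Definition reduced (w : gword) : bool := freduce w == w.

Definition ginv (w : gword) : gword := rev (map (fun p => (p.1, ~~ p.2)) w).
Definition gpos (w : seq letter) : gword := map (fun x => (x, true)) w.

Definition fendo (s : subst) (w : gword) : gword :=
  freduce (flatten (map (fun p : gletter =>
     if p.2 then gpos (s p.1) else ginv (gpos (s p.1))) w)).

Definition is_free_aut (s : subst) : Prop :=
  (forall u v, reduced u -> reduced v -> fendo s u = fendo s v -> u = v) /\
  (forall v, reduced v -> exists u, reduced u /\ fendo s u = v).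

Definition subst_mx (s : subst) : 'M[int]_3 :=
  \matrix_(i < 3, j < 3) (count_mem i (s j))%:Z.

Definition primitive_mx (M : 'M[int]_3) : Prop :=
  exists k : nat, forall i j, 0 < (M ^+ k) i j.

Definition unimodular_mx (M : 'M[int]_3) : Prop := `|\det M| = 1.

Definition char_poly_irreducible (M : 'M[int]_3) : Prop :=
  irreducible_poly (char_poly (map_mx (intr : int -> rat) M)).

Definition PF_eigenvalue (M : 'M[int]_3) (l : algC) : Prop :=
  root (char_poly (map_mx (intr : int -> algC) M)) l /\
  0 <= l /\
  (forall mu, root (char_poly (map_mx (intr : int -> algC) M)) mu -> `|mu| <= l).

Definition pisot (l : algC) : Prop :=
  1 < l /\
  exists p : {poly int},
    p \is monic /\ irreducible_poly (map_poly (intr : int -> rat) p) /\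
    root (map_poly (intr : int -> algC) p) l /\
    (forall mu, root (map_poly (intr : int -> algC) p) mu -> mu != l -> `|mu| < 1).

(* Main.v *)
Require Import Defs.
From HB Require Import structures.
From mathcomp Require Import all_boot all_order all_algebra all_field zify.
Import Order.TTheory GRing.Theory Num.Theory.
Set Implicit Arguments. Unset Strict Implicit.

Arguments push : simpl never.
Definition gi1 (p : gletter) : gletter := (p.1, ~~ p.2).
Lemma gi1K : involutive gi1. Proof. by case=> a b; rewrite /gi1 /= negbK. Qed.

Lemma cancE (x y : gletter) : ((y.1 == x.1) && (y.2 != x.2)) = (y == gi1 x).
Proof. case: x y => a b [c d]; rewrite /gi1 /= xpair_eqE. by case: b; case: d. Qed.

Lemma pushE x w : push x w =
  if w is y :: w' then (if y == gi1 x then w' else x :: w) else [:: x].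
Proof. by rewrite /push; case: w => //= y w; rewrite cancE. Qed.

Definition nc (x y : gletter) := y != gi1 x.
Definition nice (w : gword) := sorted nc w.

Lemma nice_push x w : nice w -> nice (push x w).
Proof.
rewrite pushE; case: w => [|y w] //= h. case: ifP => [_ | /negbT h2] /=.
  exact: path_sorted h.
by rewrite /nc h2.
Qed.

Lemma push_inv x w : nice w -> push (gi1 x) (push x w) = w.
Proof.
case: w => [|y w] h; rewrite (pushE x) /=.
  by rewrite pushE gi1K eqxx.
case: ifP => [/eqP ey | hne]; first subst y.
  case: w h => [|z w] /=; first by rewrite pushE.
  case/andP=> hz _; rewrite pushE.
  by move: hz; rewrite /nc => /negbTE ->.
by rewrite pushE gi1K eqxx.
Qed.

Lemma nice_freduce w : nice (freduce w).
Proof. elim: w => //= x w IH; exact: nice_push. Qed.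

Lemma freduce_nice w : nice w -> freduce w = w.
Proof.
elim: w => //= x w IH h; rewrite IH; last exact: path_sorted h.
rewrite pushE; case: w h {IH} => //= y w /andP[h _].
by rewrite /nc in h; rewrite (negbTE h).
Qed.

Definition act (a r : gword) := foldr push r a.
Lemma freduce_cat a b : freduce (a ++ b) = act a (freduce b).
Proof. by rewrite /freduce /act foldr_cat. Qed.
Lemma act_cat a b r : act (a ++ b) r = act a (act b r).
Proof. by rewrite /act foldr_cat. Qed.
Lemma nice_act a r : nice r -> nice (act a r).
Proof. elim: a => //= x a IH h; exact/nice_push/IH. Qed.

Lemma act_push x s r : nice s -> nice r -> act (push x s) r = push x (act s r).
Proof.
move=> hs hr; rewrite pushE; case: s hs => [|y s] //= hs.
case: ifP => // /eqP ->.
rewrite /= -{1}(gi1K x) push_inv //; exact: nice_act.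
Qed.

Lemma act_freduce a r : nice r -> act (freduce a) r = act a r.
Proof.
move=> hr; elim: a => //= x a IH.
by rewrite act_push ?nice_freduce // IH.
Qed.

Definition eqv a b := freduce a = freduce b.

Lemma eqv_cat a a' b b' : eqv a a' -> eqv b b' -> eqv (a ++ b) (a' ++ b').
Proof.
rewrite /eqv !freduce_cat => ha ->.
by rewrite -act_freduce ?nice_freduce // ha act_freduce // nice_freduce.
Qed.
Lemma eqv_refl a : eqv a a. Proof. by []. Qed.
Lemma eqv_sym a b : eqv a b -> eqv b a. Proof. by rewrite /eqv. Qed.
Lemma eqv_trans a b c : eqv a b -> eqv b c -> eqv a c. Proof. by rewrite /eqv => ->. Qed.
Lemma eqv_freduce a : eqv (freduce a) a.
Proof. by rewrite /eqv freduce_nice // nice_freduce. Qed.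

Lemma ginv_cons x a : ginv (x :: a) = ginv a ++ [:: gi1 x].
Proof. by rewrite /ginv /= rev_cons cats1. Qed.
Lemma ginv_cat a b : ginv (a ++ b) = ginv b ++ ginv a.
Proof. by rewrite /ginv map_cat rev_cat. Qed.
Lemma ginvK : involutive ginv.
Proof.
move=> a; rewrite /ginv map_rev revK -map_comp.
by rewrite -[RHS]map_id; apply: eq_map => -[x y] /=; rewrite negbK.
Qed.
Lemma ginv_nil : ginv [::] = [::]. Proof. by []. Qed.

Lemma act_cancel a r : nice r -> act (a ++ ginv a) r = r.
Proof.
elim: a r => //= x a IH r hr.
rewrite ginv_cons catA act_cat /= IH ?nice_push //.
by rewrite -{1}(gi1K x) push_inv.
Qed.

Lemma eqv_cancel a c : eqv (a ++ ginv a ++ c) c.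
Proof. by rewrite /eqv catA freduce_cat act_cancel // nice_freduce. Qed.
Lemma eqv_cancel' a c : eqv (ginv a ++ a ++ c) c.
Proof. by rewrite -{2}(ginvK a); apply: eqv_cancel. Qed.

Definition img (s : subst) (p : gletter) : gword :=
  if p.2 then gpos (s p.1) else ginv (gpos (s p.1)).
Definition gext (s : subst) (a : gword) : gword := flatten (map (img s) a).

Lemma img_inv s p : img s (gi1 p) = ginv (img s p).
Proof. by case: p => c [] //=; rewrite /img /= ginvK. Qed.

Lemma gext_cat s a b : gext s (a ++ b) = gext s a ++ gext s b.
Proof. by rewrite /gext map_cat flatten_cat. Qed.

Lemma gext_ginv s a : gext s (ginv a) = ginv (gext s a).
Proof.
elim: a => //= x a IH.
rewrite ginv_cons gext_cat IH /gext /= cats0 img_inv.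
by rewrite -ginv_cat.
Qed.

Lemma gpos_cat a b : gpos (a ++ b) = gpos a ++ gpos b.
Proof. by rewrite /gpos map_cat. Qed.

Lemma sw_cat s a b : subst_word s (a ++ b) = subst_word s a ++ subst_word s b.
Proof. by rewrite /subst_word map_cat flatten_cat. Qed.

Lemma gext_pos s z : gext s (gpos z) = gpos (subst_word s z).
Proof.
elim: z => //= x z IH.
by rewrite /gext /= -/(gext s (gpos z)) IH /subst_word /= gpos_cat.
Qed.

Lemma gext_push s x t : eqv (gext s (push x t)) (img s x ++ gext s t).
Proof.
rewrite pushE; case: t => [|y t]; first by rewrite /gext /= cats0.
case: ifP => [/eqP -> | _] //.
apply: eqv_sym; rewrite /gext /= -/(gext s t) img_inv.
exact: eqv_cancel.
Qed.

Lemma gext_freduce s a : eqv (gext s (freduce a)) (gext s a).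
Proof.
elim: a => //= x a IH.
apply: eqv_trans (gext_push _ _ _) _.
rewrite /gext /= -!/(gext s _).
exact: eqv_cat.
Qed.

Lemma gext_eqv s a b : eqv a b -> eqv (gext s a) (gext s b).
Proof.
move=> h; apply: eqv_trans (eqv_sym (gext_freduce s a)) _.
by rewrite /eqv in h; rewrite h; apply: gext_freduce.
Qed.

Lemma iter_gext_eqv s M a b : eqv a b -> eqv (iter M (gext s) a) (iter M (gext s) b).
Proof. elim: M => //= M IH h; exact/gext_eqv/IH. Qed.
Lemma iter_gext_cat s M a b :
  iter M (gext s) (a ++ b) = iter M (gext s) a ++ iter M (gext s) b.
Proof. by elim: M => //= M ->; rewrite gext_cat. Qed.
Lemma iter_gext_ginv s M a : iter M (gext s) (ginv a) = ginv (iter M (gext s) a).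
Proof. by elim: M => //= M ->; rewrite gext_ginv. Qed.
Lemma iter_gext_pos s M z : iter M (gext s) (gpos z) = gpos (iter M (subst_word s) z).
Proof. by elim: M => //= M ->; rewrite gext_pos. Qed.

Section Conj.
Variables (s1 s2 : subst) (w : gword).
Hypothesis H : forall g : letter,
      freduce (ginv w ++ gpos (s2 g) ++ w) = freduce (gpos (s1 g)).

Lemma conj1 z : eqv (gpos (subst_word s1 z)) (ginv w ++ gpos (subst_word s2 z) ++ w).
Proof.
elim: z => [|g z IH]; first by apply: eqv_sym; have := eqv_cancel' w [::]; rewrite cats0.
rewrite /subst_word /= -!/(subst_word _ _) !gpos_cat.
apply: eqv_trans (eqv_cat (eqv_sym (H g)) IH) _.
rewrite -!catA; apply: eqv_cat => //; apply: eqv_cat => //.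
exact: eqv_cancel.
Qed.

Lemma conjM M z : exists V,
  eqv (gpos (iter M (subst_word s1) z)) (ginv V ++ gpos (iter M (subst_word s2) z) ++ V).
Proof.
elim: M z => [|M IH] z; first by exists [::]; rewrite /= cats0.
have [V hV] := IH (subst_word s1 z).
exists (iter M (gext s2) w ++ V).
rewrite !iterSr; apply: eqv_trans hV _.
rewrite -iter_gext_pos.
apply: eqv_trans; first apply: (eqv_cat (eqv_refl _)); first apply: (eqv_cat (@iter_gext_eqv s2 M _ _ (conj1 z)) (eqv_refl V)).
rewrite !iter_gext_cat iter_gext_ginv iter_gext_pos ginv_cat -!catA.
exact: eqv_refl.
Qed.
End Conj.

Lemma all_pos p : all (fun y : gletter => y.2) (gpos p).
Proof. by rewrite all_map; apply/allP. Qed.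

Lemma nice_pos p : nice (gpos p).
Proof. by elim: p => //= x [|y p] //= IH; rewrite /nc /gi1 /= xpair_eqE andbF. Qed.

Lemma gpos_inj : injective gpos.
Proof. by apply: inj_map => x y [->]. Qed.

Lemma nice_ginv V : nice V -> nice (ginv V).
Proof.
rewrite /nice /ginv rev_sorted sorted_map; apply: sub_sorted => x y /=.
rewrite /nc /gi1 /=; apply: contra; case: x y => [a b] [c d].
by rewrite !xpair_eqE /= => /andP[/eqP-> /eqP->]; rewrite negbK !eqxx.
Qed.

Lemma nice_cat3 a x y b : nice (rcons a x) -> nice (y :: b) -> nc x y ->
  nice (rcons a x ++ y :: b).
Proof.
case: a => [|a0 a] /=; first by rewrite /nice /= => _ -> ->.
rewrite /nice /= cat_path last_rcons => -> /= -> ->; by [].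
Qed.

Lemma ginv_consr y V : ginv (y :: V) = rcons (ginv V) (gi1 y).
Proof. by rewrite ginv_cons cats1. Qed.

Lemma rot_trans (q r p : seq letter) j : r = rot j q -> (exists k, p = rot k r) ->
  exists k, p = rot k q.
Proof. move=> -> [k ->]; rewrite rot_rot_add; by eexists. Qed.

Lemma rot_lemma V : nice V -> forall q p,
  freduce (ginv V ++ gpos q ++ V) = gpos p -> exists k, p = rot k q.
Proof.
elim: V => [|y V IH] hV q p.
  rewrite cats0 freduce_nice ?nice_pos // => /gpos_inj ->; exists 0; by rewrite rot0.
have hV' : nice V by exact: path_sorted hV.
case: q => [|d q'].
  move=> h; have := eqv_cancel' (y :: V) [::]; rewrite /eqv cats0 /= h.
  by case: p {h} => // _; exists 0.
have [q0 [e eqq]] : exists q0 e, d :: q' = rcons q0 e.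
  by exists (belast d q'), (last d q'); rewrite lastI.
case: y hV => c b hV.
case hA: (b && (d == c)).
  move: hA; case: b hV => hV //= /eqP ed; subst d.
  move=> h; apply: (@rot_trans _ (rcons q' c) _ 1); first by rewrite rot1_cons.
  apply: IH => //; rewrite -h; apply: eqv_sym.
  rewrite ginv_cons -catA /=; apply: eqv_cat => //.
  apply: eqv_trans (eqv_cancel' [:: (c,true)] _) _.
  by rewrite /gpos map_rcons -cats1 -catA.
case hB: (~~ b && (e == c)).
  move: hB; case: b hV hA => hV hA //= /eqP ec; subst e.
  rewrite eqq => h; apply: (@rot_trans _ (c :: q0) _ (size (rcons q0 c) - 1)).
    by rewrite -rot1_cons -/(rotr 1 _) rotK.
  apply: IH => //; rewrite -h; apply: eqv_sym.
  rewrite ginv_cons -catA; apply: eqv_cat => //=.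
  rewrite -[(d, true) :: _ ++ _]/(gpos (d :: q') ++ _) eqq /gpos map_rcons -cats1 -catA /=.
  apply: (@eqv_cat [:: (c,true)] [:: (c,true)]) => //.
  apply: eqv_cat => //.
  exact: (eqv_cancel [:: (c, true)] V).
(* stuck case: E is nice and contains a negative letter *)
move=> h.
have hE : nice (ginv ((c, b) :: V) ++ gpos (d :: q') ++ (c, b) :: V).
  rewrite ginv_consr {1}/gpos /=.
  apply: nice_cat3; first by rewrite -ginv_consr; exact: nice_ginv.
    rewrite -[(d, true) :: _ ++ _]/(gpos (d :: q') ++ _) eqq /gpos map_rcons.
    apply: nice_cat3 => //; first by rewrite -map_rcons; exact: nice_pos.
    rewrite /nc /gi1 /= xpair_eqE.
    by case: b hA hB {h hV} => _ /= hB; rewrite ?andbF ?andbT // eq_sym hB.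
  rewrite /nc gi1K xpair_eqE.
  by case: b hA hB {h hV} => /= hA _; rewrite ?andbF ?andbT // hA.
move: h; rewrite freduce_nice // => h.
have hall := all_pos p; rewrite -h in hall.
case: b hV hE hA hB h hall => _ _ _ _ h hall.
  by have := allP hall (gi1 (c,true)); rewrite ginv_consr mem_cat mem_rcons mem_head => /(_ isT).
by have := allP hall (c,false); rewrite !mem_cat mem_head !orbT => /(_ isT).
Qed.

Lemma eqv_ginv a b : eqv a b -> eqv (ginv a) (ginv b).
Proof.
move=> h; apply: eqv_sym.
apply: eqv_trans (eqv_sym (eqv_cancel' a (ginv b))) _.
apply: eqv_trans (eqv_cat (eqv_refl (ginv a)) (eqv_cat h (eqv_refl (ginv b)))) _.
rewrite -[X in eqv _ X]cats0; apply: eqv_cat => //.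
have := eqv_cancel b [::]; by rewrite cats0.
Qed.

Lemma rotM (s1 s2 : subst) (w : gword) :
  (forall g : letter, freduce (ginv w ++ gpos (s2 g) ++ w) = freduce (gpos (s1 g))) ->
  forall M z, exists k, iter M (subst_word s1) z = rot k (iter M (subst_word s2) z).
Proof.
move=> H M z; have [V hV] := conjM H M z.
apply: (rot_lemma (nice_freduce V)).
move: hV; rewrite /eqv freduce_nice ?nice_pos // => ->.
apply: eqv_cat; first exact/eqv_ginv/eqv_freduce.
apply: eqv_cat => //; exact: eqv_freduce.
Qed.

Lemma rot_sym (T : eqType) (p q : seq T) k : p = rot k q -> exists k', q = rot k' p.
Proof. move=> ->; exists (size (rot k q) - k); by rewrite -/(rotr k _) rotK. Qed.

Lemma iter_sw_cat s n a b :
  iter n (subst_word s) (a ++ b) = iter n (subst_word s) a ++ iter n (subst_word s) b.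
Proof. by elim: n => //= n ->; rewrite sw_cat. Qed.

Lemma infix_iter s n u z w : infix u (iter n (subst_word s) [:: z]) -> z \in w ->
  infix u (iter n (subst_word s) w).
Proof.
move=> hu /splitPr [w1 w2].
rewrite iter_sw_cat -cat1s iter_sw_cat.
by apply: infix_catl; apply: infix_catr.
Qed.

Lemma infix_take (u x y : seq letter) m : size x + size u <= m -> infix u (take m (x ++ u ++ y)).
Proof.
move=> h; rewrite take_cat; case: ltnP => h1; first lia.
rewrite take_cat; case: ltnP => h2; first lia.
by apply/infixP; eexists; eexists.
Qed.

Lemma infix_drop (u x y : seq letter) m : m <= size x -> infix u (drop m (x ++ u ++ y)).
Proof.
move=> h; rewrite drop_cat; case: ltnP => h2.
  by apply/infixP; eexists; eexists.
have -> : m - size x = 0 by apply/eqP; rewrite subn_eq0.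
by rewrite drop0; apply/infixP; exists [::]; eexists.
Qed.

Lemma split_infix (u A B C S P : seq letter) : A ++ B ++ C = S ++ P ->
  infix u A -> infix u B -> infix u S \/ infix u P.
Proof.
move=> e /infixP [a1 [a2 hA]] /infixP [b1 [b2 hB]].
have hS : S = take (size S) (S ++ P) by rewrite take_size_cat.
have hP : P = drop (size S) (S ++ P) by rewrite drop_size_cat.
case: (leqP (size a1 + size u) (size S)) => h.
  left; rewrite hS -e hA -!catA; exact: infix_take.
right; rewrite hP -e.
have -> : A ++ B ++ C = (a1 ++ u ++ a2 ++ b1) ++ u ++ (b2 ++ C) by rewrite hA hB -!catA.
apply: infix_drop; rewrite !size_cat; apply: leq_trans (ltnW h) _; by rewrite leq_add2l leq_addr.
Qed.

Lemma sum_seq_count (f : letter -> nat) (z : seq letter) :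
  \sum_(l <- z) f l = \sum_(l : letter) f l * count_mem l z.
Proof.
elim: z => [|x z IH]; first by rewrite big_nil big1 // => l _; rewrite muln0.
rewrite big_cons IH /=.
rewrite [RHS](eq_bigr (fun l => f l * (x == l) + f l * count_mem l z)); last first.
  by move=> l _; rewrite /= mulnDr.
rewrite big_split /=; congr (_ + _).
rewrite (bigD1 x) //= eqxx muln1 big1 ?addn0 // => l /negbTE.
by rewrite eq_sym => ->; rewrite muln0.
Qed.

Lemma iter_sw_nil s k : iter k (subst_word s) [::] = [::].
Proof. by elim: k => //= k ->. Qed.

Lemma count_iter s k i z :
  count_mem i (iter k (subst_word s) z) =
  \sum_(l <- z) count_mem i (iter k (subst_word s) [:: l]).
Proof.
elim: z => [|x z IH]; first by rewrite big_nil iter_sw_nil.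
by rewrite -cat1s iter_sw_cat count_cat IH big_cons.
Qed.

Lemma mx_iter s k (i j : letter) :
  ((subst_mx s ^+ k)%R) i j = Posz (count_mem i (iter k (subst_word s) [:: j])).
Proof.
elim: k i j => [|k IH] i j.
  rewrite expr0 mxE /= addn0; case: eqP => [->|/eqP h]; first by rewrite eqxx.
  by rewrite eq_sym (negbTE h).
rewrite exprSr mxE iterSr count_iter.
have -> : subst_word s [:: j] = s j by rewrite /subst_word /= cats0.
rewrite sum_seq_count (big_morph Posz PoszD erefl).
apply: eq_bigr => l _; rewrite IH mxE PoszM //.
Qed.

Lemma prim_in s : primitive_mx (subst_mx s) ->
  exists K, forall (i j : letter), i \in iter K (subst_word s) [:: j].
Proof.
move=> [k hk]; exists k => i j; have := hk i j.
by rewrite mx_iter ltz_nat -has_count has_pred1.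
Qed.

Lemma lang_sub s t K :
  (forall M x, exists k, iter M (subst_word s) [:: x] = rot k (iter M (subst_word t) [:: x])) ->
  (forall i j : letter, i \in iter K (subst_word t) [:: j]) ->
  forall u, language t u -> language s u.
Proof.
move=> Hrot HK u [n [z hu]].
pose x : letter := ord0.
pose one : letter := @Ordinal 3 1 isT.
have [a [b [r e]]] : exists a b r, iter K (subst_word t) [:: x] = [:: a, b & r].
  case e: (iter K (subst_word t) [:: x]) => [|a [|b r]].
  - by have := HK x x; rewrite e.
  - have h0 := HK x x; have h1 := HK one x; rewrite e !inE in h0 h1.
    by move: h0 h1 => /eqP <- /eqP.
  - by exists a, b, r.
exists (n + K + K), x.
have [k hk] := Hrot (n + K + K) x.
have dec : iter (n + K + K) (subst_word t) [:: x] =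
  iter (n + K) (subst_word t) [:: a] ++ iter (n + K) (subst_word t) [:: b] ++
  iter (n + K) (subst_word t) r.
  by rewrite iterD e (_ : [:: a, b & r] = [:: a] ++ [:: b] ++ r) // !iter_sw_cat.
have hua : forall y, infix u (iter (n + K) (subst_word t) [:: y]).
  move=> y; rewrite iterD; exact: infix_iter hu (HK z y).
set Q := iter (n + K + K) (subst_word t) [:: x] in hk dec.
have hsplit := @split_infix u _ _ _ (take k Q) (drop k Q)
  (esym (etrans (cat_take_drop k Q) dec)) (hua a) (hua b).
rewrite hk /rot; case: hsplit => h; [exact: infix_catl | exact: infix_catr].
Qed.

Local Open Scope ring_scope.

Theorem mainTheorem1 (s1 s2 : subst) :
  (forall x, s1 x != [::]) -> (forall x, s2 x != [::]) ->
  is_free_aut s1 -> is_free_aut s2 ->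
  primitive_mx (subst_mx s1) ->
  unimodular_mx (subst_mx s1) ->
  char_poly_irreducible (subst_mx s1) ->
  (exists l : algC, PF_eigenvalue (subst_mx s1) l /\ pisot l) ->
  (exists w : gword, forall g : letter,
      freduce (ginv w ++ gpos (s2 g) ++ w) = freduce (gpos (s1 g))) ->
  forall u : seq letter, language s1 u <-> language s2 u.
Proof.
move=> _ _ _ _ hprim _ _ _ [w H] u.
have R := rotM H.
have R' : forall M z, exists k, iter M (subst_word s2) z = rot k (iter M (subst_word s1) z).
  by move=> M z; have [k hk] := R M z; exact: rot_sym hk.
have [K HK1] := prim_in hprim.
have HK2 : forall i j : letter, i \in iter K (subst_word s2) [:: j].
  by move=> i j; have [k ->] := R' K [:: j]; rewrite mem_rot.
split; first exact: (lang_sub (fun M x => R' M [:: x]) HK1).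
exact: (lang_sub (fun M x => R M [:: x]) HK2).
Qed.
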